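(* For any integers $r\ge 2$ and $t\ge 3$, $dim_s(P_r\times K_t)=t\left\lceil \frac{r}{2}\right\rceil$.
   Context: $P_r$ is the path on $r$ vertices and $K_t$ the complete graph on $t$ vertices. The direct product $G\times H$ has vertex set $V(G)\times V(H)$, with $(a,b)$ adjacent to $(c,d)$ iff $ac\in E(G)$ and $bd\in E(H)$. For a connected graph $G$, $I_G[u,v]$ is the set of vertices lying on some shortest $u$–$v$ path; a vertex $w$ strongly resolves $u,v$ if $v\in I_G[u,w]$ or $u\in I_G[v,w]$; a strong resolving set is a set $S\subseteq V(G)$ such that every pair of vertices is strongly resolved by some vertex of $S$; $dim_s(G)$ is the minimum cardinality of a strong resolving set. *)

(* Defs.v *)
From mathcomp Require Import all_boot.
Set Implicit Arguments. Unset Strict Implicit. Unset Printing Implicit Defensive.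

Section Graphs.
Variable T : finType.
Variable e : rel T.

Fixpoint reach (n : nat) (u v : T) : bool :=
  if n is n'.+1 then [exists w, e u w && reach n' w v] else u == v.

(* graph distance: least n with a walk of length n; for a connected graph
   this is < #|T| (the fallback value #|T| is only used for unreachable pairs) *)
Definition gdist (u v : T) : nat := find (fun n => reach n u v) (iota 0 #|T|).

Definition interval (u v : T) : {set T} :=
  [set w | gdist u w + gdist w v == gdist u v].

Definition strongly_resolves (w u v : T) : bool :=
  (v \in interval u w) || (u \in interval v w).

Definition strong_resolving_set (S : {set T}) : bool :=
  [forall u, forall v, [exists w in S, strongly_resolves w u v]].

(* dim_s(G): minimum cardinality of a strong resolving set
   (setT is always one, so the default #|T| is never the answer by default) *)
Definition sdim : nat := \big[minn/#|T|]_(S : {set T} | strong_resolving_set S) #|S|.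
End Graphs.

Definition path_rel (r : nat) : rel 'I_r :=
  fun i j => (i.+1 == j :> nat) || (j.+1 == i :> nat).

Definition complete_rel (t : nat) : rel 'I_t := fun i j => i != j.

Definition direct_prod (A B : finType) (eA : rel A) (eB : rel B) : rel (A * B) :=
  fun x y => eA x.1 y.1 && eB x.2 y.2.
Arguments path_rel r : clear implicits.
Arguments complete_rel t : clear implicits.

(* Main.v *)
Require Import Defs.
From mathcomp Require Import all_boot zify.
Set Implicit Arguments. Unset Strict Implicit. Unset Printing Implicit Defensive.


Lemma reach_prod (A B : finType) (eA : rel A) (eB : rel B) n (x y : A * B) :
  reach (direct_prod eA eB) n x y = reach eA n x.1 y.1 && reach eB n x.2 y.2.
Proof.
case: y => y1 y2; elim: n x => [|n IH] [x1 x2] /=; first by rewrite xpair_eqE.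
apply/existsP/andP => [[[w1 w2] /andP[/andP[h1 h2]]]|[/existsP[w1 /andP[h1 r1]] /existsP[w2 /andP[h2 r2]]]].
  by rewrite IH /= => /andP[r1 r2]; split; apply/existsP; [exists w1|exists w2]; rewrite ?h1 ?h2.
by exists (w1, w2); rewrite /direct_prod /= h1 h2 IH /= r1 r2.
Qed.

Lemma third_color t (ht : 3 <= t) (a b : 'I_t) : exists c : 'I_t, (c != a) && (c != b).
Proof.
case: (boolP [exists c : 'I_t, (c != a) && (c != b)]) => [/existsP //|/existsPn H].
exfalso.
have : #|'I_t| <= #|[set a; b]|.
  apply: subset_leq_card; apply/subsetP => c _.
  by move: (H c); rewrite !inE negb_and !negbK => /orP[]->; rewrite ?orbT.
by rewrite card_ord cards2; case: (a != b); lia.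
Qed.

Lemma reachK t (ht : 3 <= t) n (a b : 'I_t) :
  reach (complete_rel t) n a b = ((n == 0) ==> (a == b)) && ((n == 1) ==> (a != b)).
Proof.
have E m x : reach (complete_rel t) m.+1 x b = [exists w, (x != w) && reach (complete_rel t) m w b] by [].
elim: n a => [|n IH] a; first by rewrite /= andbT.
rewrite E.
case: n IH => [|n] IH.
  apply/existsP/idP => [[w /andP[h1 /eqP <-]] //|h].
  by exists b; rewrite /= eqxx andbT.
apply/existsP; case: n IH => [|n] IH.
  have [c /andP[c1 c2]] := third_color ht a b.
  by exists c; rewrite IH /= eq_sym c1 c2.
have [c /andP[c1 c2]] := third_color ht a b.
by exists c; rewrite IH /= eq_sym c1.
Qed.

Lemma ex_ord r m : m < r -> exists k : 'I_r, val k = m.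
Proof. by move=> h; exists (Ordinal h). Qed.

Lemma reachP r (hr : 2 <= r) n (i j : 'I_r) :
  reach (path_rel r) n i j = ((i - j) + (j - i) <= n) && ((n + i + j) %% 2 == 0).
Proof.
elim: n i => [|n IH] i /=.
  rewrite -val_eqE /=; apply/eqP/andP => [->|[h1 h2]]; lia.
rewrite /path_rel; apply/existsP/andP => [[k /andP[h]]|[h1 h2]].
  rewrite IH => /andP[h3 h4]; move: h; lia.
have [m [hm1 hm2]] : exists m, m < r /\ ((i.+1 == m) || (m.+1 == i)) && ((m - j) + (j - m) <= n) && ((n + m + j) %% 2 == 0).
  have := ltn_ord i; have := ltn_ord j.
  case: (ltngtP i j) => hij hj hi.
  - exists i.+1; lia.
  - exists i.-1; lia.
  - case: (ltnP i.+1 r) => hi1.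
      exists i.+1; lia.
    exists i.-1; lia.
have [k hk] := ex_ord hm1.
by exists k; have := IH k; rewrite /path_rel hk => ->; rewrite andbA.
Qed.

Lemma find_iota (p : pred nat) N d : d < N -> p d -> (forall m, m < d -> ~~ p m) ->
  find p (iota 0 N) = d.
Proof.
move=> hdN hd hm.
have hs : has p (iota 0 N) by apply/hasP; exists d; rewrite ?mem_iota.
have := nth_find 0 hs; have := @before_find _ 0 p (iota 0 N).
have := has_find p (iota 0 N); rewrite hs size_iota => hk.
rewrite nth_iota // add0n => hb hpk.
apply/eqP; rewrite eqn_leq; apply/andP; split.
  by rewrite leqNgt; apply/negP => /hb; rewrite nth_iota ?add0n ?hd //; lia.
by rewrite leqNgt; apply/negP => /hm; rewrite hpk.
Qed.

Definition G r t := direct_prod (path_rel r) (complete_rel t).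
Arguments G : clear implicits.

Definition dist r t (x y : 'I_r * 'I_t) : nat :=
  let k := (x.1 - y.1) + (y.1 - x.1) in
  if k == 0 then (if x.2 == y.2 then 0 else 2)
  else if k == 1 then (if x.2 == y.2 then 3 else 1) else k.

Lemma reachG r t (hr : 2 <= r) (ht : 3 <= t) n (x y : 'I_r * 'I_t) :
  reach (G r t) n x y = [&& (x.1 - y.1) + (y.1 - x.1) <= n, (n + x.1 + y.1) %% 2 == 0,
     (n == 0) ==> (x.2 == y.2) & (n == 1) ==> ~~ (x.2 == y.2)].
Proof. by rewrite /G reach_prod reachP // reachK // !andbA. Qed.

Lemma gdistG r t (hr : 2 <= r) (ht : 3 <= t) (x y : 'I_r * 'I_t) :
  gdist (G r t) x y = dist x y.
Proof.
rewrite /gdist; apply: find_iota.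
- rewrite card_prod !card_ord /dist.
  have := ltn_ord x.1; have := ltn_ord y.1.
  have h6 : 2 * 3 <= r * t := leq_mul hr ht.
  have hrt : r <= r * t by rewrite leq_pmulr //; lia.
  case: (x.2 == y.2); repeat case: ifP => ?; lia.
- rewrite reachG // /dist.
  case: (x.2 == y.2); repeat case: ifP => ?; lia.
- move=> m; rewrite reachG // /dist.
  case: (x.2 == y.2); repeat case: ifP => ?; lia.
Qed.

Lemma bigmin_le (I : eqType) (s : seq I) (P : pred I) (F : I -> nat) N x :
  x \in s -> P x -> \big[minn/N]_(i <- s | P i) F i <= F x.
Proof.
elim: s => // y s IH; rewrite inE big_cons => /orP[/eqP <- -> | hx hP].
  by rewrite geq_minl.
case: (P y); last exact: IH.
by rewrite (leq_trans (geq_minr _ _)) ?IH.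
Qed.

Lemma bigmin_ge (I : finType) (P : pred I) (F : I -> nat) N M :
  M <= N -> (forall i, P i -> M <= F i) -> M <= \big[minn/N]_(i | P i) F i.
Proof.
move=> hN hF; apply: (big_ind (fun x => M <= x)) => // x y hx hy.
by rewrite leq_min hx hy.
Qed.

Lemma sr_dist r t (hr : 2 <= r) (ht : 3 <= t) (w u v : 'I_r * 'I_t) :
  strongly_resolves (G r t) w u v =
  (dist u v + dist v w == dist u w) || (dist v u + dist u w == dist v w).
Proof. by rewrite /strongly_resolves /interval !inE !gdistG. Qed.

Lemma forced1 r t (hr : 2 <= r) (ht : 3 <= t) (i j l : 'I_r) (a c : 'I_t) :
  j = i.+1 :> nat -> (l != i :> nat) || (c != a) -> (l != j :> nat) || (c != a) ->
  ~~ strongly_resolves (G r t) (l, c) (i, a) (j, a).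
Proof.
move=> hj h1 h2; rewrite sr_dist // /dist /= eqxx (eq_sym a c).
move: h1 h2; case: (c == a) => /=; repeat case: ifP => ?; lia.
Qed.

Lemma forced2 r t (hr : 3 <= r) (ht : 3 <= t) (i j l : 'I_r) (a c : 'I_t) :
  i = 0 :> nat -> j = r.-1 :> nat -> (l != i :> nat) || (c != a) -> (l != j :> nat) || (c != a) ->
  ~~ strongly_resolves (G r t) (l, c) (i, a) (j, a).
Proof.
move=> hi hj h1 h2; rewrite (sr_dist (ltnW hr) ht) /dist /= eqxx (eq_sym a c).
have := ltn_ord l.
move: h1 h2; case: (c == a) => /=; repeat case: ifP => ?; lia.
Qed.

Lemma pairsum (g : nat -> bool) s m :
  (forall k, k < m -> g (s + 2 * k) || g (s + 2 * k).+1) ->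
  m <= \sum_(s <= n < s + 2 * m) g n.
Proof.
elim: m => [|m IH] H; first by [].
have -> : s + 2 * m.+1 = (s + 2 * m).+2 by lia.
rewrite big_nat_recr /=; last lia.
rewrite big_nat_recr /=; last lia.
have := IH (fun k hk => H k (ltnW hk)).
have := H m (ltnSn m).
case: (g (s + 2 * m)); case: (g (s + 2 * m).+1) => //= _; lia.
Qed.

Lemma cyc (g : nat -> bool) r (hr : 2 <= r)
  (h1 : forall n, n.+1 < r -> g n || g n.+1) (h2 : 3 <= r -> g 0 || g r.-1) :
  uphalf r <= \sum_(0 <= n < r) g n.
Proof.
rewrite uphalf_half -divn2 -modn2.
have hm : r = 2 * (r %/ 2) + r %% 2 by lia.
set m := r %/ 2 in hm *.
case: (ltnP (r %% 2) 1) => ho.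
  have e0 : r %% 2 = 0 by lia.
  rewrite e0.
  have -> : \sum_(0 <= n < r) g n = \sum_(0 <= n < 0 + 2 * m) g n by rewrite add0n {1}hm e0 addn0.
  apply: pairsum => k hk; apply: h1; lia.
have ho1 : r %% 2 = 1 by lia.
rewrite ho1.
have -> : \sum_(0 <= n < r) g n = \sum_(0 <= n < (2 * m).+1) g n by rewrite {1}hm ho1 addn1.
case hg: (g r.-1).
  rewrite big_nat_recr //=.
  have -> : 2 * m = r.-1 by lia.
  rewrite hg addn1 add1n ltnS.
  have -> : r.-1 = 0 + 2 * m by lia.
  apply: pairsum => k hk; apply: h1; lia.
have g0 : g 0 by move: (h2 ltac:(lia)); rewrite hg orbF.
rewrite big_nat_recl // g0 add1n ltnS.
have -> : \sum_(0 <= i < 2 * m) g i.+1 = \sum_(1 <= i < 1 + 2 * m) g i.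
  by rewrite big_add1 /=.
apply: pairsum => k hk; have := h1 (1 + 2 * k); rewrite !addSn !add0n => -> //; lia.
Qed.

Lemma hit r t (S : {set 'I_r * 'I_t}) (hS : strong_resolving_set (G r t) S) u v :
  (forall w, w != u -> w != v -> ~~ strongly_resolves (G r t) w u v) ->
  (u \in S) || (v \in S).
Proof.
move=> hf; move/forallP: hS => /(_ u)/forallP/(_ v)/existsP[w /andP[wS sw]].
case: (eqVneq w u) => [<-|wu]; first by rewrite wS.
case: (eqVneq w v) => [<-|wv]; first by rewrite wS orbT.
by move: (hf w wu wv); rewrite sw.
Qed.

Lemma card_split r t (S : {set 'I_r * 'I_t}) :
  #|S| = \sum_(a < t) \sum_(i < r) ((i, a) \in S).
Proof.
rewrite exchange_big pair_bigA /= -sum1_card big_mkcond /=.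
by apply: eq_bigr => [[i a]] _; case: ((i, a) \in S).
Qed.

Lemma lower r t (hr : 2 <= r) (ht : 3 <= t) (S : {set 'I_r * 'I_t}) :
  strong_resolving_set (G r t) S -> t * uphalf r <= #|S|.
Proof.
move=> hS; rewrite card_split.
rewrite -[t in t * _]card_ord -sum_nat_const.
apply: leq_sum => a _.
case: r hr S hS => [//|r'] hr S hS.
set g := fun n => (inord n, a) \in S.
have -> : \sum_(i < r'.+1) ((i, a) \in S) = \sum_(0 <= n < r'.+1) g n.
  by rewrite big_mkord; apply: eq_bigr => i _; rewrite /g inord_val.
apply: cyc => //.
  move=> n hn; apply: hit => // w; case: w => l c.
  rewrite !xpair_eqE !negb_and -!val_eqE /=.
  apply: forced1 => //; rewrite !inordK; lia.
move=> h3; apply: hit => // w; case: w => l c.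
rewrite !xpair_eqE !negb_and -!val_eqE /=.
by apply: forced2 => //; rewrite inordK.
Qed.

Definition S0 r t : {set 'I_r * 'I_t} :=
  [set x : 'I_r * 'I_t | (x.1 %% 2 == 1) || (x.1 == r.-1 :> nat)].
Arguments S0 : clear implicits.

Lemma dist0 r t (x : 'I_r * 'I_t) : dist x x = 0.
Proof. by rewrite /dist !subnn eqxx. Qed.

Lemma sr_sym r t (w u v : 'I_r * 'I_t) :
  strongly_resolves (G r t) w u v = strongly_resolves (G r t) w v u.
Proof. by rewrite /strongly_resolves orbC. Qed.

Lemma core r t (hr : 2 <= r) (ht : 3 <= t) (i j : 'I_r) (a b : 'I_t) :
  i <= j -> i %% 2 = 0 -> j %% 2 = 0 -> j != r.-1 :> nat ->
  [exists w in S0 r t, strongly_resolves (G r t) w (i, a) (j, b)].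
Proof.
move=> hij hi hj hjr.
have hj1 : j.+1 < r by have := ltn_ord j; lia.
set J := Ordinal hj1.
have JS c : (J, c) \in S0 r t by rewrite inE /=; lia.
case: (eqVneq a b) => [<-|ab].
  have [c /andP[c1 _]] := third_color ht a a.
  apply/existsP; exists (J, c); rewrite JS /=.
  case: (eqVneq i j) => [<-|nij].
    by rewrite sr_dist // dist0 add0n eqxx.
  rewrite sr_dist // /dist /= eqxx (eq_sym a c) (negbTE c1).
  have : i != j :> nat by [].
  repeat case: ifP => ?; lia.
apply/existsP; exists (J, a); rewrite JS /=.
rewrite sr_dist // /dist /= eqxx (negbTE ab) (eq_sym b a) (negbTE ab).
repeat case: ifP => ?; lia.
Qed.

Lemma S0_res r t (hr : 2 <= r) (ht : 3 <= t) : strong_resolving_set (G r t) (S0 r t).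
Proof.
apply/forallP => u; apply/forallP => v.
case: (boolP (u \in S0 r t)) => hu.
  by apply/existsP; exists u; rewrite hu sr_dist // dist0 addn0 eqxx orbT.
case: (boolP (v \in S0 r t)) => hv.
  by apply/existsP; exists v; rewrite hv sr_dist // dist0 addn0 eqxx.
move: hu hv; case: u => i a; case: v => j b; rewrite !inE /= => hu hv.
case: (leqP i j) => hij.
  apply: core => //; lia.
have : [exists w in S0 r t, strongly_resolves (G r t) w (j, b) (i, a)].
  apply: core => //; lia.
move/existsP => [w /andP[h1 h2]]; apply/existsP; exists w.
by rewrite h1 sr_sym.
Qed.

Lemma sum_odd n : \sum_(0 <= i < n) (i %% 2 == 1) = n %/ 2.
Proof.
elim: n => [|n IH]; first by rewrite big_geq.
rewrite big_nat_recr //= IH; case: eqP; lia.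
Qed.

Lemma card_S0 r t (hr : 2 <= r) : #|S0 r t| = t * uphalf r.
Proof.
rewrite card_split.
have E : \sum_(0 <= i < r) ((i %% 2 == 1) || (i == r.-1 :> nat)) = uphalf r.
  case: r hr => // r' _ /=.
  rewrite big_nat_recr //= eqxx orbT.
  rewrite (eq_big_nat _ _ (F2 := fun i => (i %% 2 == 1) : nat)); last first.
    move=> i /andP[_ hi]; rewrite (_ : (i == r') = false) ?orbF //; lia.
  by rewrite sum_odd -divn2 addn1.
rewrite (eq_bigr (fun _ => uphalf r)); last first.
  by move=> a _; rewrite -E big_mkord; apply: eq_bigr => i _; rewrite inE.
by rewrite sum_nat_const card_ord.
Qed.

Theorem theorem37 (r t : nat) (hr : 2 <= r) (ht : 3 <= t) :
  sdim (direct_prod (path_rel r) (complete_rel t)) = t * uphalf r.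
Proof.
rewrite /sdim -/(G r t).
apply/eqP; rewrite eqn_leq; apply/andP; split.
  rewrite -(card_S0 t hr).
  apply: bigmin_le; first exact: mem_index_enum.
  exact: S0_res.
apply: bigmin_ge; last by move=> S hS; apply: lower.
rewrite card_prod !card_ord [r * t]mulnC; apply: leq_mul => //.
rewrite uphalf_half -divn2 -modn2; lia.
Qed.
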